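(* Let $x=(x_1,\dots,x_p)$ and $y=(y_1,\dots,y_q)$ be disjoint tuples of variables, let $G(x)$, $H(y)$, $K(y)$ be homogeneous polynomials with $G\cdot H$ and $K$ homogeneous of the same degree $d$, and let $F = G(x)H(y)+K(y)$. Let $\alpha=\partial/\partial x_j$ for some $j$. Then $$r(F) \geq \big(\mathrm{al}(\alpha\circ G)-\mathrm{al}(\alpha^2\circ G)\big)\cdot \mathrm{al}(H).$$ In particular, for any $a\ge 1$, $r(x_1^a H(y)+K(y)) \geq \mathrm{al}(H)$.
   Context: Apolarity: differential operators $\partial/\partial x_i$, $\partial/\partial y_i$ act on polynomials by differentiation, written $\Theta\circ F$. $\mathrm{al}(G)$ is the apolar length: the dimension over $\mathbb{C}$ of the space of all partial derivatives of all orders of $G$ (including $G$ itself; $0$ if $G=0$). $r(F)$ is the Waring rank of $F$: the least $r$ with $F=\sum_{i=1}^r c_i\ell_i^d$ for linear forms $\ell_i$ and scalars $c_i$. *)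

(* Defs.v *)
From HB Require Import structures.
From mathcomp Require Import all_boot all_order all_algebra.
From Stdlib Require Import ClassicalEpsilon.
Set Implicit Arguments. Unset Strict Implicit. Unset Printing Implicit Defensive.
Import Order.TTheory GRing.Theory.
Local Open Scope ring_scope.

(* A monomial in n variables is an exponent vector m : 'I_n -> nat,
   standing for  prod_i x_i^(m i). *)
Definition monom (n : nat) := {ffun 'I_n -> nat}.

(* A polynomial in n variables over R: its coefficient function.
   (All polynomials considered below are homogeneous, hence finitely supported.) *)
Definition mpoly (R : Type) (n : nat) := monom n -> R.

Section MPoly.
Variable R : fieldType.

Definition mzero {n} : mpoly R n := fun _ => 0.
Definition mone {n} : mpoly R n := fun m => if m == [ffun => 0%N] then 1 else 0.
Definition madd {n} (f g : mpoly R n) : mpoly R n := fun m => f m + g m.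

Definition mdeg {n} (m : monom n) : nat := (\sum_(i < n) m i)%N.

(* product: (f g)_m = sum_{a + b = m} f_a g_b *)
Definition mmul {n} (f g : mpoly R n) : mpoly R n := fun m =>
  \sum_(a : {ffun 'I_n -> 'I_(mdeg m).+1} | [forall i, (a i <= m i)%N])
     f [ffun i => val (a i)] * g [ffun i => (m i - a i)%N].

Definition mexp {n} (f : mpoly R n) (k : nat) : mpoly R n := iter k (mmul f) mone.

Definition mono1 {n} (i : 'I_n) : monom n := [ffun k => nat_of_bool (k == i)].
Definition mvar {n} (i : 'I_n) : mpoly R n := fun m => if m == mono1 i then 1 else 0.
Definition lin {n} (c : 'I_n -> R) : mpoly R n :=
  fun m => \sum_(i < n) (if m == mono1 i then c i else 0).

Definition homog {n} (e : nat) (f : mpoly R n) : Prop :=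
  forall m, f m != 0 -> mdeg m = e.

Definition pderiv {n} (j : 'I_n) (f : mpoly R n) : mpoly R n :=
  fun m => (m j).+1%:R * f [ffun k => (m k + nat_of_bool (k == j))%N].

Definition deriv_seq {n} (s : seq 'I_n) (f : mpoly R n) : mpoly R n :=
  foldr pderiv f s.

Definition lin_indep {n} (fs : seq (mpoly R n)) : Prop :=
  forall c : 'I_(size fs) -> R,
    (forall m, \sum_(i < size fs) c i * nth mzero fs i m = 0) -> forall i, c i = 0.

(* k is the dimension of the span of all partial derivatives (of all orders,
   including order 0) of f, i.e. the maximal size of a linearly independent
   family of such derivatives *)
Definition al_is {n} (f : mpoly R n) (k : nat) : Prop :=
  (exists ss : seq (seq 'I_n), size ss = k /\
       lin_indep (map (fun s => deriv_seq s f) ss)) /\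
  (forall ss : seq (seq 'I_n),
       lin_indep (map (fun s => deriv_seq s f) ss) -> (size ss <= k)%N).

Definition al {n} (f : mpoly R n) : nat := epsilon (inhabits 0%N) (al_is f).

Definition waring_decomp {n} (F : mpoly R n) (d r : nat) : Prop :=
  exists (c : 'I_r -> R) (l : 'I_r -> 'I_n -> R),
    forall m, F m = \sum_(i < r) c i * mexp (lin (l i)) d m.

Definition waring_rank {n} (F : mpoly R n) (d : nat) : nat :=
  epsilon (inhabits 0%N)
    (fun r => waring_decomp F d r /\ forall r', waring_decomp F d r' -> (r <= r')%N).

(* embeddings of polynomials in x = (x_1..x_p) resp. y = (y_1..y_q)
   into polynomials in (x, y), variables of x first. *)
Definition emb_x {p q} (f : mpoly R p) : mpoly R (p + q) := fun m =>
  if [forall k : 'I_q, m (rshift p k) == 0%N] then f [ffun i => m (lshift q i)] else 0.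
Definition emb_y {p q} (f : mpoly R q) : mpoly R (p + q) := fun m =>
  if [forall i : 'I_p, m (lshift q i) == 0%N] then f [ffun k => m (rshift p k)] else 0.

Definition GHK {p q} (G : mpoly R p) (H K : mpoly R q) : mpoly R (p + q) :=
  madd (mmul (emb_x G) (emb_y H)) (emb_y K).

End MPoly.

Arguments mzero {R n}.
Arguments mone {R n}.
Arguments mvar {R n}.
Arguments mono1 {n}.

(* Main.v *)
Require Import Defs.
From HB Require Import structures.
From mathcomp Require Import all_boot all_order all_algebra.
From mathcomp Require Import ring zify.
From Stdlib Require Import ClassicalEpsilon FunctionalExtensionality Classical.
Set Implicit Arguments. Unset Strict Implicit. Unset Printing Implicit Defensive.
Import GRing.Theory.
Local Open Scope ring_scope.

Section Basic.
Variable R : fieldType.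

Definition addj {n} (m : monom n) (j : 'I_n) : monom n :=
  [ffun k => (m k + nat_of_bool (k == j))%N].

Lemma sum_ind n (j : 'I_n) : (\sum_(k < n) nat_of_bool (k == j))%N = 1%N.
Proof. by rewrite (bigD1 j) //= eqxx big1 // => k /negPf ->. Qed.

Lemma mdeg_addj n (m : monom n) j : mdeg (addj m j) = (mdeg m).+1.
Proof.
rewrite /mdeg /addj (eq_bigr (fun k => m k + nat_of_bool (k == j))%N); last by move=> k _; rewrite ffunE.
by rewrite big_split /= sum_ind addn1.
Qed.

Lemma mdeg_ge n (m : monom n) i : (m i <= mdeg m)%N.
Proof. by rewrite /mdeg (bigD1 i) //= leq_addr. Qed.

Lemma deriv_deg n (f : mpoly R n) e s m :
  homog e f -> deriv_seq s f m != 0 -> (mdeg m + size s)%N = e.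
Proof.
move=> hf; elim: s m => [|x s IH] m /=; first by rewrite addn0; apply: hf.
rewrite /pderiv mulf_eq0 negb_or => /andP[_ /IH].
by rewrite -/(addj m x) mdeg_addj addSnnS.
Qed.

End Basic.

Section Pow.
Variable R : fieldType.

Definition subj {n} (m : monom n) (j : 'I_n) : monom n :=
  [ffun k => (m k - nat_of_bool (k == j))%N].

Lemma mmul_lin n (l : 'I_n -> R) (g : mpoly R n) m :
  mmul (lin l) g m = \sum_i (if (0 < m i)%N then l i * g (subj m i) else 0).
Proof.
rewrite /mmul /lin.
under eq_bigr do rewrite mulr_suml.
rewrite exchange_big /=; apply: eq_bigr => i _.
case: (posnP (m i)) => [mi0|mipos].
  rewrite big1 // => a /forallP /(_ i) ai.
  case: eqP => [ha|]; last by rewrite mul0r.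
  have := congr1 (fun f : monom n => f i) ha; rewrite !ffunE eqxx /= => h.
  by move: ai; rewrite h mi0.
have hd : (0 < mdeg m)%N by apply: leq_trans mipos (mdeg_ge m i).
have [a0 a0E] : {a0 : {ffun 'I_n -> 'I_(mdeg m).+1} |
    forall k, nat_of_ord (a0 k) = nat_of_bool (k == i)}.
  exists [ffun k => inord (nat_of_bool (k == i))] => k.
  by rewrite ffunE /= inordK // ltnS (leq_trans _ hd) //; case: (k == i).
have a0V k : val (a0 k) = nat_of_bool (k == i) by exact: a0E.
have a0m : [ffun k => val (a0 k)] = mono1 i.
  by apply/ffunP => k; rewrite !ffunE a0V.
rewrite (bigD1 a0) /=; last first.
  by apply/forallP => k; rewrite a0E; case: eqP => [->|//]; rewrite mipos.
rewrite big1 ?addr0.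
  rewrite a0m eqxx; congr (_ * g _); apply/ffunP => k; by rewrite !ffunE a0V.
move=> a /andP[_ ne]; case: eqP => [ha|]; last by rewrite mul0r.
case/eqP: ne; apply/ffunP => k; apply: val_inj; rewrite a0V.
by have := congr1 (fun f : monom n => f k) ha; rewrite !ffunE.
Qed.

End Pow.

Section Pow2.
Variable R : fieldType.
Hypothesis charR0 : [pchar R] =i pred0.

Lemma natr_neq0 k : (k%:R == 0 :> R) = (k == 0)%N.
Proof. by move/pcharf0P: charR0. Qed.

Lemma bigD1_upd (T : Type) (idx : T) (op : Monoid.com_law idx) n (F G : 'I_n -> T) j :
  (forall k, k != j -> F k = G k) ->
  \big[op/idx]_k F k = op (F j) (\big[op/idx]_(k | k != j) G k).
Proof. by move=> h; rewrite (bigD1 j) //=; congr (op _ _); apply: eq_bigr. Qed.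

Definition mult {n} (m : monom n) : R :=
  (mdeg m)`!%:R / (\prod_i (m i)`!)%:R.
Definition Pw {n} (l : 'I_n -> R) (e : nat) : mpoly R n := fun m =>
  if mdeg m == e then mult m * \prod_i l i ^+ m i else 0.

Lemma prodfact_neq0 n (m : monom n) : (\prod_i (m i)`!)%:R != 0 :> R.
Proof. by rewrite natr_neq0 -lt0n prodn_gt0 // => i; apply: fact_gt0. Qed.

Lemma mdeg_subj n (m : monom n) i : (0 < m i)%N -> mdeg m = (mdeg (subj m i)).+1.
Proof.
move=> h; rewrite -(mdeg_addj _ i); congr mdeg; apply/ffunP => k; rewrite !ffunE.
by case: eqP => [->|_]; rewrite ?subn0 ?addn0 // addn1 subn1 prednK.
Qed.

Lemma mdeg_eq0 n (m : monom n) : (mdeg m == 0)%N = (m == [ffun => 0%N]).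
Proof.
apply/idP/eqP => [h|->]; last by rewrite /mdeg big1 // => i _; rewrite ffunE.
apply/ffunP => i; rewrite ffunE; apply/eqP; rewrite -leqn0 -(eqP h); exact: mdeg_ge.
Qed.

Lemma mexp_lin n (l : 'I_n -> R) e : mexp (lin l) e = Pw l e.
Proof.
elim: e => [|e IH]; apply: functional_extensionality => m.
  rewrite /= /mone /Pw mdeg_eq0; case: eqP => // ->.
  rewrite /mult /mdeg !big1 ?mulr1 ?divr1 // => i _; rewrite ffunE //.
rewrite /mexp iterS -/(mexp (lin l) e) IH mmul_lin /Pw.
case: eqP => [hm|hm]; last first.
  rewrite big1 // => i _; case: ifP => // /mdeg_subj h; case: eqP; last by rewrite mulr0.
  by move=> h'; case: hm; rewrite h h'.
pose X := e`!%:R / (\prod_i (m i)`!)%:R * \prod_i l i ^+ m i.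
transitivity (\sum_i (m i)%:R * X).
  apply: eq_bigr => i _; case: (posnP (m i)) => [->|mi]; first by rewrite mul0r.
  have hs := mdeg_subj mi; rewrite hm in hs; case: hs => hs.
  rewrite hs eqxx /X /mult hs.
  have hfa : \prod_k (m k)`! = (m i * \prod_k (subj m i k)`!)%N.
    rewrite (@bigD1_upd _ _ _ _ (fun k => (m k)`!) (fun k => (subj m i k)`!) i); last first.
      by move=> k /negPf h; rewrite ffunE h subn0.
    rewrite (@bigD1_upd _ _ _ _ (fun k => (subj m i k)`!) (fun k => (subj m i k)`!) i) //.
    rewrite ffunE eqxx subn1 mulnA; congr (_ * _)%N; rewrite -{1}(prednK mi) factS prednK //.
  have hp : \prod_k l k ^+ m k = l i * \prod_k l k ^+ subj m i k.
    rewrite (bigD1 i) //= [in RHS](bigD1 i) //= mulrA -exprS ffunE eqxx subn1 prednK //.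
    by congr (_ * _); apply: eq_bigr => k /negPf h; rewrite ffunE h subn0.
  have hnz := prodfact_neq0 (subj m i).
  have hmi : (m i)%:R != 0 :> R by rewrite natr_neq0 -lt0n.
  rewrite hp hfa natrM; field.
  by rewrite hnz hmi.
rewrite -mulr_suml -natr_sum -/(mdeg m) hm /X /mult hm factS natrM; field.
exact: prodfact_neq0.
Qed.

End Pow2.

Section Deriv.
Variable R : fieldType.
Hypothesis charR0 : [pchar R] =i pred0.

Lemma pderiv_Pw n (l : 'I_n -> R) e j :
  pderiv j (Pw l e) = fun m => e%:R * l j * Pw l e.-1 m.
Proof.
apply: functional_extensionality => m; rewrite /pderiv /Pw -/(addj m j) mdeg_addj.
case: eqP => [he|he].
  rewrite -he /= eqxx /mult mdeg_addj.
  have hp : \prod_k l k ^+ addj m j k = l j * \prod_k l k ^+ m k.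
    rewrite (bigD1 j) //= [in RHS](bigD1 j) //= ffunE eqxx addn1 exprS -mulrA.
    by congr (_ * (_ * _)); apply: eq_bigr => k /negPf h; rewrite ffunE h addn0.
  have hf : \prod_k (addj m j k)`! = ((m j).+1 * \prod_k (m k)`!)%N.
    rewrite (bigD1 j) //= [in RHS](bigD1 j) //= ffunE eqxx addn1 factS mulnA.
    by congr (_ * _)%N; apply: eq_bigr => k /negPf h; rewrite ffunE h addn0.
  rewrite hp hf factS !natrM; field.
  by rewrite (prodfact_neq0 charR0) nat1r natr_neq0.
case: e he => [|e] he; first by rewrite mulr0 !mul0r.
rewrite /=; case: eqP => [h|_]; first by case: he; rewrite h.
by rewrite !mulr0.
Qed.

Definition ffr (d k : nat) : R := (d ^_ k)%:R.

Lemma deriv_Pw_sum n r (c : 'I_r -> R) (l : 'I_r -> 'I_n -> R) d s :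
  deriv_seq s (fun m => \sum_i c i * Pw (l i) d m) =
  fun m => \sum_i c i * ffr d (size s) * (\prod_(x <- s) l i x) * Pw (l i) (d - size s) m.
Proof.
elim: s => [|x s IH]; apply: functional_extensionality => m.
  by rewrite /= subn0; apply: eq_bigr => i _; rewrite /ffr ffactn0 big_nil !mulr1.
rewrite /= IH /pderiv mulr_sumr; apply: eq_bigr => i _.
have := congr1 (fun f => f m) (pderiv_Pw (l i) (d - size s) x); rewrite /pderiv => h.
rewrite mulrCA h.
rewrite big_cons /ffr ffactnSr natrM subnS; ring.
Qed.

End Deriv.

Section VecSeq.
Variables (K : fieldType) (vT : vectType K).

Lemma freeP_seq (X : seq vT) : free X <->
  (forall k : nat -> K, \sum_(i < size X) k i *: X`_i = 0 ->
     forall i, (i < size X)%N -> k i = 0).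
Proof.
split.
  move=> /(@freeP _ _ _ (in_tuple X)) h k hk i hi.
  exact: (h (fun o : 'I_(size X) => k o) hk (Ordinal hi)).
move=> h; apply/(@freeP _ _ _ (in_tuple X)) => k hk i.
pose kn (x : nat) := if insub x is Some o then k o else 0.
have knE (o : 'I_(size X)) : kn o = k o by rewrite /kn valK.
rewrite -knE; apply: h (ltn_ord i); rewrite -[RHS]hk; apply: eq_bigr => o _.
by rewrite knE.
Qed.

Lemma memv_span_seq (X : seq vT) v : v \in <<X>>%VS <->
  exists k : nat -> K, v = \sum_(i < size X) k i *: X`_i.
Proof.
split.
  move=> /(coord_span (X := in_tuple X)) ->.
  exists (fun x => if insub x is Some o then coord (in_tuple X) o v else 0).
  by apply: eq_bigr => o _; rewrite valK.
case=> k ->; apply: memv_suml => i _; apply: memvZ; apply: memv_span.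
exact: mem_nth.
Qed.

Lemma extract_free (A : Type) (h : A -> vT) (L : seq A) :
  exists L', free (map h L') /\ (<<map h L'>> = <<map h L>>)%VS.
Proof.
elim: L => [|a L [L' [fr sp]]]; first by exists [::]; split => //; exact: nil_free.
have [ha|ha] := boolP (h a \in <<map h L'>>%VS).
  exists L'; split => //=; rewrite span_cons -sp.
  by apply/esym/addv_idPr; rewrite -memvE.
exists (a :: L'); split => /=; first by rewrite free_cons ha.
by rewrite !span_cons sp.
Qed.

End VecSeq.

Section Box.
Variable R : fieldType.
Variables (n D : nat).

Definition Box := {ffun 'I_n -> 'I_D.+1}.
Definition monb (b : Box) : monom n := [ffun i => nat_of_ord (b i)].
Definition NB := #|{: Box}|.
Definition vec (f : mpoly R n) : 'rV[R]_NB := \row_(k < NB) f (monb (enum_val k)).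
Definition inbox (f : mpoly R n) := forall m, f m != 0 -> forall i, (m i <= D)%N.

Lemma vecE f b : vec f 0 (enum_rank b) = f (monb b).
Proof. by rewrite mxE enum_rankK. Qed.

Lemma monb_ex (m : monom n) : (forall i, m i <= D)%N -> exists b, monb b = m.
Proof.
move=> h; exists [ffun i => inord (m i)]; apply/ffunP => i.
by rewrite !ffunE inordK // ltnS.
Qed.

Lemma vec_comb k (c : nat -> R) (g : nat -> mpoly R n) :
  vec (fun m => \sum_(i < k) c i * g i m) = \sum_(i < k) c i *: vec (g i).
Proof.
apply/rowP => x; rewrite !mxE summxE; apply: eq_bigr => i _; by rewrite !mxE.
Qed.

Lemma vec_comb0 k (c : nat -> R) (g : nat -> mpoly R n) :
  (forall i, inbox (g i)) ->
  \sum_(i < k) c i *: vec (g i) = 0 -> forall m, \sum_(i < k) c i * g i m = 0.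
Proof.
move=> hb; rewrite -vec_comb => h0 m.
have [hm|] := boolP [forall i, m i <= D]%N.
  have [b <-] := monb_ex (fun i => (forallP hm) i).
  by have := congr1 (fun v : 'rV_NB => v 0 (enum_rank b)) h0; rewrite vecE mxE.
rewrite negb_forall => /existsP [i]; rewrite -ltnNge => hi.
rewrite big1 // => x _; have [->|h] := eqVneq (g x m) 0; first by rewrite mulr0.
by have := hb x m h i; rewrite leqNgt hi.
Qed.

Lemma lin_indep_seq (fs : seq (mpoly R n)) : lin_indep fs <->
  (forall c : nat -> R, (forall m, \sum_(i < size fs) c i * nth mzero fs i m = 0) ->
     forall i, (i < size fs)%N -> c i = 0).
Proof.
split.
  move=> h c hc i hi; exact: (h (fun o : 'I_(size fs) => c o) hc (Ordinal hi)).
move=> h c hc i.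
pose kn (x : nat) := if insub x is Some o then c o else 0.
have knE (o : 'I_(size fs)) : kn o = c o by rewrite /kn valK.
rewrite -knE; apply: h (ltn_ord i) => m; rewrite -[RHS](hc m); apply: eq_bigr => o _.
by rewrite knE.
Qed.

Lemma lin_indep_free (fs : seq (mpoly R n)) :
  (forall i, inbox (nth mzero fs i)) -> lin_indep fs <-> free (map vec fs).
Proof.
move=> hb; rewrite lin_indep_seq freeP_seq size_map.
have hn i : (i < size fs)%N -> (map vec fs)`_i = vec (nth mzero fs i).
  by move=> hi; rewrite (nth_map mzero).
split=> h c hc i hi; apply: h hi.
  apply: (@vec_comb0 (size fs) c (fun i => nth mzero fs i)).
    exact: hb.
  by rewrite -[RHS]hc; apply: eq_bigr => o _; rewrite hn.
rewrite (eq_bigr (fun o : 'I_(size fs) => c o *: vec (nth mzero fs o))); last by move=> o _; rewrite hn.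
by rewrite -vec_comb; apply/rowP => x; rewrite !mxE hc.
Qed.

End Box.

Section AlChar.
Variable R : fieldType.

Lemma al_unique n (f : mpoly R n) k : al_is f k -> al f = k.
Proof.
move=> hk; have ex : exists k, al_is f k by exists k.
have := epsilon_spec (inhabits 0%N) (al_is f) ex; rewrite -/(al f) => ha.
case: hk => [[ss [hs hl]] hb]; case: ha => [[ss' [hs' hl']] hb'].
apply/eqP; rewrite eqn_leq; rewrite -{1}hs' -{2}hs.
by rewrite (hb _ hl') (hb' _ hl).
Qed.

Lemma al_char n (f : mpoly R n) D (L : seq (seq 'I_n)) :
  (forall s, inbox D (deriv_seq s f)) ->
  (forall s, vec D (deriv_seq s f) \in <<map (fun s => vec D (deriv_seq s f)) L>>%VS) ->
  al f = \dim <<map (fun s => vec D (deriv_seq s f)) L>>.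
Proof.
move=> hb hin; apply: al_unique.
set h := fun s => vec D (deriv_seq s f).
have hmap ss : map (vec D) (map (fun s => deriv_seq s f) ss) = map h ss by rewrite -map_comp.
have hbn ss i : inbox D (nth mzero (map (fun s => deriv_seq s f) ss) i).
  case: (ltnP i (size ss)) => hi; first by rewrite (nth_map [::]).
  by rewrite nth_default ?size_map // => m; rewrite eqxx.
split.
  have [L' [fr sp]] := extract_free h L.
  exists L'; split; last by apply/(lin_indep_free (D := D)) => //; rewrite hmap.
  by move: fr; rewrite /free sp size_map => /eqP.
move=> ss /lin_indep_free hl; have := hl D (hbn ss); rewrite hmap => fr.
move: (fr); rewrite /free size_map => /eqP <-; apply: dimvS; apply/span_subvP => v.
by move=> /mapP [s _ ->]; apply: hin.
Qed.

End AlChar.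

Section AlHomog.
Variable R : fieldType.

Fixpoint seqs_le n k : seq (seq 'I_n) :=
  if k is k'.+1 then [::] :: [seq i :: s | i <- enum 'I_n, s <- seqs_le n k']
  else [:: [::]].

Lemma mem_seqs_le n k (s : seq 'I_n) : (s \in seqs_le n k) = (size s <= k)%N.
Proof.
elim: k s => [|k IH] [|x s] //=.
rewrite in_cons /= ltnS; apply/allpairsP/idP => [[[a b] /= [_ hb [_ ->]]]|h].
  by rewrite -IH.
by exists (x, s); rewrite /= mem_enum IH.
Qed.

Lemma inbox_comb n D k (c : nat -> R) (g : nat -> mpoly R n) :
  (forall i, inbox D (g i)) -> inbox D (fun m => \sum_(i < k) c i * g i m).
Proof.
move=> hb m hm; have [i hi] : exists i : 'I_k, c i * g i m != 0.
  apply/existsP; apply: contraR hm => /existsPn h.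
  by apply/eqP; apply: big1 => i _; apply/eqP/negbNE/h.
by apply: (hb i); move: hi; rewrite mulf_eq0 negb_or => /andP[].
Qed.

Lemma vec_inj n D (f g : mpoly R n) :
  inbox D f -> inbox D g -> vec D f = vec D g -> forall m, f m = g m.
Proof.
move=> hf hg he m.
have [hm|] := boolP [forall i, m i <= D]%N.
  have [b <-] := monb_ex (fun i => (forallP hm) i).
  by have := congr1 (fun v : 'rV_(NB n D) => v 0 (enum_rank b)) he; rewrite !vecE.
rewrite negb_forall => /existsP [i]; rewrite -ltnNge => hi.
have z (h : mpoly R n) : inbox D h -> h m = 0.
  move=> hh; apply/eqP; apply: contraT => /hh /(_ i); by rewrite leqNgt hi.
by rewrite !z.
Qed.

Lemma homog_inbox n e (f : mpoly R n) s : homog e f -> inbox e (deriv_seq s f).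
Proof.
move=> hf m /(deriv_deg hf) h i; apply: leq_trans (mdeg_ge m i) _.
by rewrite -h leq_addr.
Qed.

Lemma deriv_big n e (f : mpoly R n) s : homog e f -> (e < size s)%N ->
  forall m, deriv_seq s f m = 0.
Proof.
move=> hf hs m; apply/eqP; apply: contraT => /(deriv_deg hf) h.
by move: hs; rewrite -h ltnNge leq_addl.
Qed.

Definition dspan n D (f : mpoly R n) (L : seq (seq 'I_n)) :=
  <<map (fun s => vec D (deriv_seq s f)) L>>%VS.

Lemma al_homog n e (f : mpoly R n) : homog e f ->
  al f = \dim (dspan e f (seqs_le n e)).
Proof.
move=> hf; apply: al_char => s; first exact: homog_inbox.
case: (leqP (size s) e) => hs.
  by apply: memv_span; apply: (map_f (fun s => vec e (deriv_seq s f))); rewrite mem_seqs_le.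
have -> : vec e (deriv_seq s f) = 0.
  by apply/rowP => x; rewrite !mxE (deriv_big hf hs).
exact: mem0v.
Qed.

End AlHomog.

Section AlBasis.
Variable R : fieldType.

Lemma dspan_mem n e (f : mpoly R n) s : homog e f ->
  vec e (deriv_seq s f) \in dspan e f (seqs_le n e).
Proof.
move=> hf; case: (leqP (size s) e) => hs.
  by apply: memv_span; apply: (map_f (fun s => vec e (deriv_seq s f))); rewrite mem_seqs_le.
have -> : vec e (deriv_seq s f) = 0.
  by apply/rowP => x; rewrite !mxE (deriv_big hf hs).
exact: mem0v.
Qed.

Lemma nth_derivs_inbox n e (f : mpoly R n) ss i : homog e f ->
  inbox e (nth mzero (map (fun s => deriv_seq s f) ss) i).
Proof.
move=> hf; case: (ltnP i (size ss)) => hi.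
  by rewrite (nth_map [::]) //; apply: homog_inbox.
by rewrite nth_default ?size_map // => m; rewrite eqxx.
Qed.

Lemma al_ge n e (f : mpoly R n) ss : homog e f ->
  lin_indep (map (fun s => deriv_seq s f) ss) -> (size ss <= al f)%N.
Proof.
move=> hf /(lin_indep_free (D := e)) hl.
have := hl (fun i => nth_derivs_inbox (ss:=ss) (i:=i) hf); rewrite -map_comp => fr.
rewrite (al_homog hf); move: (fr); rewrite /free size_map => /eqP <-.
apply: dimvS; apply/span_subvP => v /mapP [s _ ->]; exact: dspan_mem.
Qed.

Lemma al_basis n e (f : mpoly R n) : homog e f ->
  exists ss, size ss = al f /\ lin_indep (map (fun s => deriv_seq s f) ss) /\
   forall s, exists c : nat -> R, forall m,
     deriv_seq s f m = \sum_(i < size ss) c i * nth mzero (map (fun s => deriv_seq s f) ss) i m.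
Proof.
move=> hf; set h := fun s => vec e (deriv_seq s f).
have [L' [fr sp]] := extract_free h (seqs_le n e).
have hmap : map (vec e) (map (fun s => deriv_seq s f) L') = map h L' by rewrite -map_comp.
exists L'; split.
  by rewrite (al_homog hf) /dspan -sp; move: fr; rewrite /free size_map => /eqP.
split; first by apply/(lin_indep_free (D := e)); [move=> i; exact: nth_derivs_inbox | rewrite hmap].
move=> s; have := dspan_mem s hf; rewrite /dspan -sp -/h => /memv_span_seq [k hk].
exists k; apply: (vec_inj (D := e)).
- exact: homog_inbox.
- by apply: inbox_comb => i; apply: nth_derivs_inbox.
rewrite vec_comb hk size_map; apply: eq_bigr => i _.
by rewrite -hmap (nth_map mzero) // size_map.
Qed.

End AlBasis.

Section AlHomogD.
Variable R : fieldType.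

Lemma homog_deriv n e (f : mpoly R n) s : homog e f -> homog (e - size s) (deriv_seq s f).
Proof. by move=> hf m /(deriv_deg hf) <-; rewrite addnK. Qed.

Lemma homog_le n e D (f : mpoly R n) : homog e f -> (e <= D)%N -> inbox D f.
Proof.
move=> hf hD m /hf h i; apply: leq_trans (mdeg_ge m i) _; by rewrite h.
Qed.

Lemma al_homog_D n e D (f : mpoly R n) : homog e f -> (e <= D)%N ->
  al f = \dim (dspan D f (seqs_le n D)).
Proof.
move=> hf hD; apply: al_char => s.
  have h1 := homog_deriv (s:=s) hf; exact: (homog_le h1 (leq_trans (leq_subr (size s) e) hD)).
case: (leqP (size s) D) => hs.
  by apply: memv_span; apply: (map_f (fun s => vec D (deriv_seq s f))); rewrite mem_seqs_le.
have -> : vec D (deriv_seq s f) = 0.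
  by apply/rowP => x; rewrite !mxE (deriv_big hf (leq_ltn_trans hD hs)).
exact: mem0v.
Qed.

End AlHomogD.

Lemma deriv_rcons (R : fieldType) n (f : mpoly R n) s x :
  deriv_seq (rcons s x) f = deriv_seq s (pderiv x f).
Proof. by rewrite /deriv_seq foldr_rcons. Qed.

Lemma sumEnumVal (R : fieldType) (I : finType) (F : I -> R) :
  \sum_(k < #|{: I}|) F (enum_val k) = \sum_p F p.
Proof. by rewrite -(big_enum_val (A := {: I})). Qed.

Section ML.
Variable R : fieldType.
Hypothesis charR0 : [pchar R] =i pred0.
Variables (n r d : nat) (c : 'I_r -> R) (l : 'I_r -> 'I_n -> R) (j : 'I_n).

Definition FF : mpoly R n := fun m => \sum_i c i * Pw (l i) d m.
Local Notation I := ('I_r * 'I_d.+1)%type.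
Definition Q := #|{: I}|.
Definition evf (s : seq 'I_n) (p : I) : R :=
  if (nat_of_ord p.2 == d - (size s).+1)%N
  then c p.1 * ffr R d (size s).+1 * \prod_(x <- rcons s j) l p.1 x else 0.
Definition ev s : 'rV[R]_Q := \row_k evf s (enum_val k).
Definition Mp : 'M[R]_(Q, NB n d) :=
  \matrix_(k < Q, b < NB n d) Pw (l (enum_val k : I).1) (enum_val k : I).2 (monb (enum_val b)).

Lemma ev_Mp s : ev s *m Mp = vec d (deriv_seq s (pderiv j FF)).
Proof.
apply/rowP => b; rewrite !mxE -deriv_rcons /FF (deriv_Pw_sum charR0) size_rcons.
set m := monb (enum_val b).
under eq_bigr do rewrite !mxE.
rewrite (sumEnumVal (fun p => evf s p * Pw (l p.1) p.2 m)) -(pair_bigA _ (fun i e => evf s (i, e) * Pw (l i) e m)) /=.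
apply: eq_bigr => i _.
have he : (d - (size s).+1 < d.+1)%N by rewrite ltnS leq_subr.
rewrite (bigD1 (Ordinal he)) //= big1 ?addr0.
  by rewrite /evf /= eqxx.
move=> e /eqP ne; rewrite /evf /=; case: eqP => [h|]; last by rewrite mul0r.
by case: ne; apply: val_inj.
Qed.


Definition tf (p p' : I) : R :=
  if (p.1 == p'.1) && (nat_of_ord p'.2 == (nat_of_ord p.2).+1)%N
  then ((nat_of_ord p'.2)%:R * l p.1 j)^-1 else 0.
Definition Tm : 'M[R]_(Q, Q) := \matrix_(k, k') tf (enum_val k) (enum_val k').

Lemma prod_rcons (s : seq 'I_n) x (g : 'I_n -> R) :
  \prod_(y <- rcons s x) g y = (\prod_(y <- s) g y) * g x.
Proof. by rewrite -cats1 big_cat big_seq1. Qed.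

Lemma T_ev s : ((size s).+2 <= d)%N -> ev (rcons s j) *m Tm = ev s.
Proof.
move=> hs; apply/rowP => k'; rewrite !mxE.
under eq_bigr do rewrite !mxE.
rewrite (sumEnumVal (fun p => evf (rcons s j) p * tf p (enum_val k'))).
case: (enum_val k') => i' [[|e0] he'] /=.
  rewrite big1; last by move=> p _; rewrite /tf /= andbF mulr0.
  rewrite /evf /=; case: eqP => // h; exfalso; move: h hs; lia.
rewrite -(pair_bigA _ (fun i e => evf (rcons s j) (i, e) * tf (i, e) (i', Ordinal he'))).
have he0 : (e0 < d.+1)%N by apply: ltnW.
rewrite (bigD1 i') //= [X in _ + X]big1 ?addr0; last first.
  move=> i /negPf hi; rewrite big1 // => e _; by rewrite /tf /= hi mulr0.
rewrite (bigD1 (Ordinal he0)) //= [X in _ + X]big1 ?addr0; last first.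
  move=> e /eqP ne; rewrite /tf /= eqxx /=; case: eqP => [h|]; last by rewrite mulr0.
  by case: ne; apply: val_inj; case: h.
rewrite /tf /evf /= !eqxx /= size_rcons !prod_rcons.
have hc : (e0 == d - (size s).+2)%N = (e0.+1 == d - (size s).+1)%N.
  apply/eqP/eqP; lia.
rewrite hc; case: eqP => [h|]; last by rewrite mul0r.
rewrite /ffr ffactnSr -h natrM.
have [->|ha] := eqVneq (l i' j) 0; first by rewrite !mulr0 mul0r.
have hn : (e0.+1)%:R != 0 :> R by rewrite (natr_neq0 charR0).
by field; rewrite ha nat1r (natr_neq0 charR0).
Qed.

Definition SL := seqs_le n d.
Definition EE := <<map ev SL>>%VS.
Definition EE2 := <<map (fun s => ev (rcons s j)) SL>>%VS.
Definition zv (i : 'I_r) : 'rV[R]_Q := \row_k (if enum_val k == (i, ord0) then 1 else 0).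
Definition Z0 := <<map zv (enum 'I_r)>>%VS.

Lemma dimZ0 : (\dim Z0 <= r)%N.
Proof. by apply: leq_trans (dim_span _) _; rewrite size_map size_enum_ord. Qed.

Lemma ev_Z0 s : (d <= (size s).+1)%N -> ev s \in Z0.
Proof.
move=> hs; have -> : ev s = \sum_(i < r) evf s (i, ord0) *: zv i.
  apply/rowP => k; rewrite !mxE summxE.
  under eq_bigr do rewrite !mxE.
  case: (enum_val k) => i' [[|e] he] /=.
    have -> : (i', Ordinal he) = (i', ord0) by congr pair; apply: val_inj.
    rewrite (bigD1 i') //= eqxx mulr1 big1 ?addr0 //.
    move=> i /negPf hi; case: eqP => [[h]|]; last by rewrite mulr0.
    by move: hi; rewrite h eqxx.
  rewrite big1; last by move=> i _; case: eqP => [[_ h]|]; [by [] | rewrite mulr0].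
  rewrite /evf /=; case: eqP => // h; exfalso; move: h hs; lia.
apply: memv_suml => i _; apply: memvZ; apply: memv_span.
by apply: map_f; rewrite mem_enum.
Qed.

Lemma ev_big s : (d < (size s).+1)%N -> ev s = 0.
Proof.
move=> hs; apply/rowP => k; rewrite !mxE /evf.
by case: ifP => // _; rewrite /ffr ffact_small // mulr0 mul0r.
Qed.

Lemma EE2_sub : (EE2 <= EE)%VS.
Proof.
apply/span_subvP => v /mapP [s hs ->]; move: hs; rewrite mem_seqs_le => hs.
case: (ltnP (size s) d) => h.
  by apply: memv_span; apply: map_f; rewrite mem_seqs_le size_rcons.
by rewrite ev_big ?mem0v // size_rcons ltnS (leq_trans h) // leqnSn.
Qed.

Definition LT := linfun (mulmxr Tm : 'rV[R]_Q -> 'rV[R]_Q).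
Definition LM := linfun (mulmxr Mp : 'rV[R]_Q -> 'rV[R]_(NB n d)).

Lemma EE_sub : (EE <= LT @: EE2 + Z0)%VS.
Proof.
apply/span_subvP => v /mapP [s hs ->]; move: (hs); rewrite mem_seqs_le => hs'.
case: (leqP (size s).+2 d) => h.
  apply: (subvP (addvSl _ _)); rewrite -(T_ev h).
  have -> : ev (rcons s j) *m Tm = LT (ev (rcons s j)) by rewrite lfunE.
  by apply: memv_img; apply: memv_span; apply: (map_f (fun s => ev (rcons s j))).
by apply: (subvP (addvSr _ _)); apply: ev_Z0; rewrite -ltnS.
Qed.

Lemma dim_img_le (aT rT : vectType R) (f : 'Hom(aT, rT)) U : (\dim (f @: U) <= \dim U)%N.
Proof. by rewrite -(limg_ker_dim f U) leq_addl. Qed.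

Lemma dimE : (\dim EE <= \dim EE2 + r)%N.
Proof.
apply: leq_trans (dimvS EE_sub) _; apply: leq_trans (dimv_add_leqif _ _).1 _.
by apply: leq_add; [exact: dim_img_le | exact: dimZ0].
Qed.

Lemma dimU : (\dim (LM @: EE) - \dim (LM @: EE2) <= r)%N.
Proof.
have h1 := limg_ker_dim LM EE; have h2 := limg_ker_dim LM EE2.
have h3 : (\dim (EE2 :&: lker LM) <= \dim (EE :&: lker LM))%N.
  by apply: dimvS; apply: capvS => //; exact: EE2_sub.
have h4 := dimvS EE2_sub; have h5 := dimE; lia.
Qed.


Lemma FF_homog : homog d FF.
Proof.
move=> m hm; have [i hi] : exists i : 'I_r, c i * Pw (l i) d m != 0.
  apply/existsP; apply: contraR hm => /existsPn h.
  by apply/eqP; apply: big1 => i _; apply/eqP/negbNE/h.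
by move: hi; rewrite /Pw; case: (mdeg m =P d) => [//|_]; rewrite mulr0 eqxx.
Qed.

Lemma ML_main : (al (pderiv j FF) - al (pderiv j (pderiv j FF)) <= r)%N.
Proof.
have h1 : homog (d - 1) (pderiv j FF) := homog_deriv (s := [:: j]) FF_homog.
have h2 : homog (d - 2) (pderiv j (pderiv j FF)) := homog_deriv (s := [:: j; j]) FF_homog.
rewrite (al_homog_D h1 (leq_subr _ _)) (al_homog_D h2 (leq_subr _ _)).
have e1 : dspan d (pderiv j FF) (seqs_le n d) = (LM @: EE)%VS.
  rewrite /EE limg_span -map_comp /dspan; congr span; apply: eq_map => s /=.
  by rewrite lfunE /= ev_Mp.
have e2 : dspan d (pderiv j (pderiv j FF)) (seqs_le n d) = (LM @: EE2)%VS.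
  rewrite /EE2 limg_span -map_comp /dspan; congr span; apply: eq_map => s /=.
  by rewrite lfunE /= ev_Mp deriv_rcons.
rewrite e1 e2; exact: dimU.
Qed.

End ML.

Section Waring.
Variable R : fieldType.
Hypothesis charR0 : [pchar R] =i pred0.

Lemma alpha_ex d (e : 'I_d.+1) : exists a : 'I_d.+1 -> R,
  forall k : 'I_d.+1, \sum_s a s * (nat_of_ord s)%:R ^+ k = (k == e)%:R.
Proof.
pose V := Vandermonde d.+1 (\row_(s < d.+1) (nat_of_ord s)%:R : 'rV[R]_d.+1).
have hV : V \in unitmx.
  rewrite unitmxE det_Vandermonde unitfE; apply/prodf_neq0 => i _.
  apply/prodf_neq0 => k hik; rewrite !mxE -natrB 1?ltnW //.
  by rewrite (natr_neq0 charR0) subn_eq0 -ltnNge.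
exists (fun s => invmx V s e) => k.
have := congr1 (fun M : 'M_d.+1 => M k e) (mulmxV hV); rewrite !mxE => <-.
by apply: eq_bigr => s _; rewrite !mxE mulrC.
Qed.

Lemma mult_neq0 n (m : monom n) : mult R m != 0.
Proof.
by rewrite /mult mulf_neq0 // ?invr_eq0 ?(prodfact_neq0 charR0) // (natr_neq0 charR0) -lt0n fact_gt0.
Qed.

Lemma waring_exists n d (F : mpoly R n) : homog d F -> exists r, waring_decomp F d r.
Proof.
move=> hF.
have [al hal] : exists al : 'I_d.+1 -> 'I_d.+1 -> R, forall e k : 'I_d.+1,
    \sum_s al e s * (nat_of_ord s)%:R ^+ k = (k == e)%:R.
  pose P (e : 'I_d.+1) (a : 'I_d.+1 -> R) :=
    forall k : 'I_d.+1, \sum_s a s * (nat_of_ord s)%:R ^+ k = (k == e)%:R.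
  exists (fun e => epsilon (inhabits (fun _ => 0)) (P e)) => e k.
  exact: (epsilon_spec (inhabits (fun _ => 0)) (P e) (alpha_ex e)).
pose c' (p : ({ffun 'I_n -> 'I_d.+1} * {ffun 'I_n -> 'I_d.+1})%type) := F (monb p.1) / mult R (monb p.1) * \prod_i al (p.1 i) (p.2 i).
pose l' (p : ({ffun 'I_n -> 'I_d.+1} * {ffun 'I_n -> 'I_d.+1})%type) := fun i => (nat_of_ord (p.2 i))%:R : R.
exists #|{: ({ffun 'I_n -> 'I_d.+1} * {ffun 'I_n -> 'I_d.+1})%type}|; exists (fun k => c' (enum_val k)); exists (fun k => l' (enum_val k)) => m.
under eq_bigr do rewrite (mexp_lin charR0).
rewrite (sumEnumVal (fun p : ({ffun 'I_n -> 'I_d.+1} * {ffun 'I_n -> 'I_d.+1})%type => c' p * Pw (l' p) d m)) -(pair_bigA _ (fun b t => c' (b, t) * Pw (l' (b, t)) d m)) /=.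
rewrite /Pw; case: eqP => hm; last first.
  rewrite big1; last by move=> b _; rewrite big1 // => t _; rewrite mulr0.
  by apply/eqP; apply: contraT => /hF.
have hmb : forall i, (m i <= d)%N by move=> i; rewrite -hm mdeg_ge.
have [b0 hb0] := monb_ex hmb.
have key b : \sum_t c' (b, t) * (mult R m * \prod_i l' (b, t) i ^+ m i) =
    F (monb b) / mult R (monb b) * mult R m * (monb b == m)%:R.
  transitivity (F (monb b) / mult R (monb b) * mult R m *
      \sum_(t : {ffun 'I_n -> 'I_d.+1}) \prod_i (al (b i) (t i) * (nat_of_ord (t i))%:R ^+ m i)).
    rewrite mulr_sumr; apply: eq_bigr => t _; rewrite /c' /l' /= big_split /=; ring.
  congr (_ * _); rewrite -(bigA_distr_bigA (fun i s => al (b i) s * (nat_of_ord s)%:R ^+ m i)).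
  transitivity (\prod_i ((inord (m i) : 'I_d.+1) == b i)%:R : R).
    apply: eq_bigr => i _; rewrite -hal; apply: eq_bigr => s _.
    by rewrite inordK // ltnS.
  rewrite -natr_prod; congr (_ %:R).
  have [e|ne] := eqVneq (monb b) m.
    by rewrite big1 // => i _; rewrite -e ffunE inord_val eqxx.
  have [i hi] : exists i, (inord (m i) : 'I_d.+1) != b i.
    apply/existsP; apply: contraNT ne => /existsPn h; apply/eqP/ffunP => i.
    rewrite ffunE; have := h i; rewrite negbK => /eqP <-; by rewrite inordK // ltnS.
  by rewrite (bigD1 i) //= (negbTE hi) mul0n.
under eq_bigr do rewrite key.
rewrite (bigD1 b0) //= hb0 eqxx mulr1 big1 ?addr0.
  by field; apply: mult_neq0.
move=> b hb; case: eqP => [h|]; last by rewrite mulr0.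
by case/eqP: hb; apply/ffunP => i; apply: val_inj; have := congr1 (fun f : monom n => f i) (etrans h (esym hb0)); rewrite !ffunE.

Qed.
End Waring.

Section Prod.
Variable R : fieldType.
Variables p q : nat.

Definition mx (m : monom (p + q)) : monom p := [ffun i => m (lshift q i)].
Definition my (m : monom (p + q)) : monom q := [ffun k => m (rshift p k)].
Definition prodxy (g : mpoly R p) (h : mpoly R q) : mpoly R (p + q) :=
  fun m => g (mx m) * h (my m).

Lemma lshift_lt (i : 'I_p) : (lshift q i < p)%N.
Proof. by rewrite /= ltn_ord. Qed.
Lemma rshift_lt (k : 'I_q) : (rshift p k < p)%N = false.
Proof. by rewrite /= ltnNge leq_addr. Qed.

Lemma mmul_emb (g : mpoly R p) (h : mpoly R q) :
  mmul (emb_x g) (emb_y h) = prodxy g h.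
Proof.
apply: functional_extensionality => m; rewrite /mmul.
have hd z : (m z < (mdeg m).+1)%N by rewrite ltnS mdeg_ge.
have [a0 a0V] : {a0 : {ffun 'I_(p + q) -> 'I_(mdeg m).+1} |
    forall z, val (a0 z) = if (z < p)%N then m z else 0%N}.
  exists [ffun z : 'I_(p + q) => inord (if (z < p)%N then m z else 0%N)] => z.
  by rewrite ffunE /= inordK //; case: ifP.
rewrite (bigD1 a0) /=; last by apply/forallP => z; rewrite a0V; case: ifP.
rewrite big1 ?addr0.
  rewrite /emb_x /emb_y.
  have -> : [forall k, [ffun z => val (a0 z)] (rshift p k) == 0%N].
    by apply/forallP => k; rewrite ffunE a0V rshift_lt.
  have -> : [forall i, [ffun z => (m z - a0 z)%N] (lshift q i) == 0%N].
    by apply/forallP => i; rewrite ffunE a0V lshift_lt subnn.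
  rewrite /prodxy; congr (g _ * h _); apply/ffunP => i; rewrite !ffunE.
    by rewrite a0V lshift_lt.
  by rewrite a0V rshift_lt subn0.
move=> a /andP[/forallP ha ne]; rewrite /emb_x /emb_y.
case: ifP => [/forallP hx|]; last by rewrite mul0r.
case: ifP => [/forallP hy|]; last by rewrite mulr0.
case/eqP: ne; apply/ffunP => z; apply: val_inj; rewrite a0V.
case: split_ordP => [i ->|k ->]; rewrite ?lshift_lt ?rshift_lt.
  have := hy i; rewrite ffunE subn_eq0 => h1; apply/eqP; rewrite eqn_leq h1.
  by rewrite andbT; apply: ha.
by have := hx k; rewrite ffunE => /eqP.
Qed.

Lemma mx_addj_l m (i : 'I_p) : mx (addj m (lshift q i)) = addj (mx m) i.
Proof. by apply/ffunP => k; rewrite !ffunE eq_lshift. Qed.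
Lemma my_addj_l m (i : 'I_p) : my (addj m (lshift q i)) = my m.
Proof. by apply/ffunP => k; rewrite !ffunE eq_rlshift addn0. Qed.
Lemma mx_addj_r m (k : 'I_q) : mx (addj m (rshift p k)) = mx m.
Proof. by apply/ffunP => i; rewrite !ffunE eq_lrshift addn0. Qed.
Lemma my_addj_r m (k : 'I_q) : my (addj m (rshift p k)) = addj (my m) k.
Proof. by apply/ffunP => i; rewrite !ffunE eq_rshift. Qed.

Lemma pderiv_prod_l g h (i : 'I_p) :
  pderiv (lshift q i) (prodxy g h) = prodxy (pderiv i g) h.
Proof.
apply: functional_extensionality => m; rewrite /pderiv /prodxy -!/(addj _ _).
by rewrite mx_addj_l my_addj_l mulrA; congr (_ * _ * _); rewrite ffunE.
Qed.

Lemma pderiv_prod_r g h (k : 'I_q) :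
  pderiv (rshift p k) (prodxy g h) = prodxy g (pderiv k h).
Proof.
apply: functional_extensionality => m; rewrite /pderiv /prodxy -!/(addj _ _).
by rewrite mx_addj_r my_addj_r mulrCA; congr (_ * (_ * _)); rewrite ffunE.
Qed.

End Prod.

Section Prod2.
Variable R : fieldType.
Variables p q : nat.

Lemma deriv_prod_ex (u : mpoly R p) (v : mpoly R q) s :
  exists sx sy, deriv_seq s (prodxy u v) = prodxy (deriv_seq sx u) (deriv_seq sy v).
Proof.
elim: s => [|x s [sx [sy IH]]]; first by exists [::], [::].
rewrite /= IH; case: (split_ordP x) => [i ->|k ->].
  by exists (i :: sx), sy; rewrite pderiv_prod_l.
by exists sx, (k :: sy); rewrite pderiv_prod_r.
Qed.

Lemma deriv_prod_cat (u : mpoly R p) (v : mpoly R q) (sx : seq 'I_p) (sy : seq 'I_q) :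
  deriv_seq (map (@lshift p q) sx ++ map (@rshift p q) sy) (prodxy u v) =
  prodxy (deriv_seq sx u) (deriv_seq sy v).
Proof.
rewrite /deriv_seq foldr_cat.
have -> : foldr (@pderiv R _) (prodxy u v) (map (@rshift p q) sy) = prodxy u (foldr (@pderiv R _) v sy).
  by elim: sy => //= k sy ->; rewrite pderiv_prod_r.
by elim: sx => //= i sx ->; rewrite pderiv_prod_l.
Qed.

Lemma mdeg_split (m : monom (p + q)) : mdeg m = (mdeg (mx m) + mdeg (my m))%N.
Proof.
rewrite /mdeg big_split_ord; congr (_ + _)%N; apply: eq_bigr => i _; by rewrite ffunE.
Qed.

Lemma prodxy_homog eu ev (u : mpoly R p) (v : mpoly R q) :
  homog eu u -> homog ev v -> homog (eu + ev) (prodxy u v).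
Proof.
move=> hu hv m; rewrite /prodxy mulf_eq0 negb_or => /andP[/hu h1 /hv h2].
by rewrite mdeg_split h1 h2.
Qed.

Definition mjoin (a : monom p) (b : monom q) : monom (p + q) :=
  [ffun z => match split z with inl i => a i | inr k => b k end].

Lemma mx_mjoin a b : mx (mjoin a b) = a.
Proof.
apply/ffunP => i; rewrite !ffunE; case: split_ordP => [i' /lshift_inj -> //|k h].
by move: (congr1 val h) (ltn_ord i) => /= ->; rewrite ltnNge leq_addr.
Qed.

Lemma my_mjoin a b : my (mjoin a b) = b.
Proof.
apply/ffunP => k; rewrite !ffunE; case: split_ordP => [i h|k' /rshift_inj -> //].
by move: (congr1 val h) (ltn_ord i) => /= <-; rewrite ltnNge leq_addr.
Qed.

End Prod2.

Lemma sum_div_mod (R : fieldType) a b (F : nat -> R) :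
  \sum_(k < a * b) F k = \sum_(x < a) \sum_(y < b) F (x * b + y)%N.
Proof.
elim: a => [|a IH]; first by rewrite mul0n !big_ord0.
rewrite big_ord_recr /= -IH mulSnr -!(big_mkord xpredT).
rewrite (big_cat_nat _ (n := a * b)) //= ?leq_addr //.
congr (_ + _); rewrite -{1}[(a * b)%N]add0n big_addn addKn big_mkord.
by apply: eq_bigr => y _; rewrite addnC.
Qed.

Section Steinitz.
Variable R : fieldType.

Lemma steinitz n D (fs gs : seq (mpoly R n)) :
  (forall i, inbox D (nth mzero fs i)) -> (forall i, inbox D (nth mzero gs i)) ->
  lin_indep fs ->
  (forall i, (i < size fs)%N -> exists c : nat -> R, forall m,
      nth mzero fs i m = \sum_(k < size gs) c k * nth mzero gs k m) ->
  (size fs <= size gs)%N.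
Proof.
move=> hf hg /(lin_indep_free hf) fr hc.
move: (fr); rewrite /free size_map => /eqP <-.
rewrite -(size_map (vec D) gs); apply: (leq_trans _ (dim_span (map (vec D) gs))).
apply: dimvS; apply/span_subvP => v /(nthP 0) [i]; rewrite size_map => hi <-.
rewrite (nth_map mzero) //; have [c hcm] := hc i hi.
apply/memv_span_seq; exists c; rewrite size_map.
have -> : nth mzero fs i = (fun m => \sum_(k < size gs) c k * nth mzero gs k m).
  exact: functional_extensionality.
rewrite (vec_comb D (size gs) c (fun k => nth mzero gs k)).
by apply: eq_bigr => k _; rewrite (nth_map mzero).
Qed.

End Steinitz.

Section AlProd.
Variable R : fieldType.
Variables p q : nat.

Lemma divmod_xy b x y : (y < b)%N -> ((x * b + y) %/ b = x /\ (x * b + y) %% b = y)%N.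
Proof.
move=> hy; have hb : (0 < b)%N by apply: leq_ltn_trans hy.
by rewrite divnMDl // divn_small // addn0 modnMDl modn_small.
Qed.

Lemma al_prod eu ev (u : mpoly R p) (v : mpoly R q) :
  homog eu u -> homog ev v -> al (prodxy u v) = (al u * al v)%N.
Proof.
move=> hu hv.
have [ssU [hsU [liU spU]]] := al_basis hu.
have [ssV [hsV [liV spV]]] := al_basis hv.
set a := al u in hsU *; set b := al v in hsV *.
pose U x := nth mzero (map (fun s => deriv_seq s u) ssU) x.
pose V y := nth mzero (map (fun s => deriv_seq s v) ssV) y.
pose w := prodxy u v.
pose ssW := [seq map (@lshift p q) (nth [::] ssU (k %/ b)) ++ map (@rshift p q) (nth [::] ssV (k %% b))
            | k <- iota 0 (a * b)].
pose gsW := map (fun s => deriv_seq s w) ssW.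
have hw : homog (eu + ev) w by apply: prodxy_homog.
have gsWE x y : (x < a)%N -> (y < b)%N -> nth mzero gsW (x * b + y) = prodxy (U x) (V y).
  move=> hx hy; have [hd hm] := divmod_xy x hy.
  have hk : (x * b + y < a * b)%N.
    by apply: (@leq_trans (x * b + b)); [rewrite ltn_add2l | rewrite -mulSnr leq_mul2r hx orbT].
  rewrite /gsW (nth_map [::]) ?size_map ?size_iota // (nth_map 0%N) ?size_iota //.
  rewrite nth_iota // add0n hd hm deriv_prod_cat /U /V !(nth_map [::]) ?hsU ?hsV //.
apply: al_unique; split.
  exists ssW; split; first by rewrite size_map size_iota.
  apply/lin_indep_seq => c hc.
  have hszW : size gsW = (a * b)%N by rewrite size_map size_map size_iota.
  have hc' : forall m, \sum_(k < a * b) c k * nth mzero gsW k m = 0.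
    by move=> m; rewrite -hszW; exact: hc m.
  have key x y : (x < a)%N -> (y < b)%N -> c (x * b + y)%N = 0.
    move=> hx hy.
    have hy0 : forall mxv, \sum_(x0 < a) c (x0 * b + y)%N * U x0 mxv = 0.
      move=> mxv; pose cy y0 := \sum_(x0 < a) c (x0 * b + y0)%N * U x0 mxv.
      suff h : forall y0, (y0 < b)%N -> cy y0 = 0 by exact: h.
      have /lin_indep_seq := liV; rewrite size_map hsV; apply => myv.
      have := hc' (mjoin mxv myv).
      rewrite (sum_div_mod a b (fun k => c k * nth mzero gsW k (mjoin mxv myv))).
      rewrite exchange_big /= => h0; rewrite -[RHS]h0; apply: eq_bigr => y0 hy0.
      rewrite /cy mulr_suml; apply: eq_bigr => x0 _.
      by rewrite gsWE // /prodxy mx_mjoin my_mjoin mulrA.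
    have /lin_indep_seq := liU; rewrite size_map hsU => hU.
    apply: (hU (fun x0 => c (x0 * b + y)%N)) hx => mxv; exact: hy0.
  rewrite -/gsW hszW => k hk.
  have hb : (0 < b)%N by rewrite lt0n; apply: contraTneq hk => ->; rewrite muln0.
  rewrite (divn_eq k b); apply: key; last by rewrite ltn_mod.
  by rewrite ltn_divLR.
move=> ss hl; rewrite -(size_map (fun s => deriv_seq s w) ss).
have -> : (a * b)%N = size gsW by rewrite size_map size_map size_iota.
apply: (steinitz (D := eu + ev) _ _ hl).
- by move=> i; apply: nth_derivs_inbox hw.
- by move=> i; apply: nth_derivs_inbox hw.
move=> i hi; rewrite size_map in hi; rewrite (nth_map [::]) //.
have [sx [sy ->]] := deriv_prod_ex u v (nth [::] ss i).
have [al1 h1] := spU sx; have [be1 h2] := spV sy.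
exists (fun k => al1 (k %/ b)%N * be1 (k %% b)%N) => m.
have hszW : size gsW = (a * b)%N by rewrite size_map size_map size_iota.
rewrite ?size_iota ?hszW /prodxy h1 h2 hsU hsV.
rewrite (sum_div_mod a b (fun k => al1 (k %/ b)%N * be1 (k %% b)%N * nth mzero gsW k m)) mulr_suml.
apply: eq_bigr => x _; rewrite mulr_sumr; apply: eq_bigr => y _.
have [hd hm] := divmod_xy x (ltn_ord y).
rewrite hd hm gsWE // /prodxy /U /V; ring.
Qed.

End AlProd.

Lemma exists_min (P : nat -> Prop) : (exists r, P r) ->
  exists r, P r /\ forall r', P r' -> (r <= r')%N.
Proof.
move=> [r0 h0]; apply: NNPP => hn.
have key : forall N k, (k <= N)%N -> ~ P k.
  elim=> [|N IH] k hk hk'.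
    apply: hn; exists k; split => // r' _; move: hk; rewrite leqn0 => /eqP ->; exact: leq0n.
  apply: hn; exists k; split => // r' hr'; apply: contraPT (IH r') => hlt.
  move=> /(_ _) h; apply: h => //; rewrite -ltnS; apply: leq_trans hk.
  by rewrite ltnNge.
exact: (key r0 r0 (leqnn r0) h0).
Qed.

Section Final.
Variable R : fieldType.
Hypothesis charR0 : [pchar R] =i pred0.

Lemma waring_rank_spec n d (F : mpoly R n) : homog d F ->
  waring_decomp F d (waring_rank F d).
Proof.
move=> hF; have [r hr] := waring_exists charR0 hF.
have ex := exists_min (ex_intro _ r hr).
by have [] := epsilon_spec (inhabits 0%N) _ ex.
Qed.

Lemma ML_decomp n d r (F : mpoly R n) j : waring_decomp F d r ->
  (al (pderiv j F) - al (pderiv j (pderiv j F)) <= r)%N.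
Proof.
move=> [c [l hF]].
have -> : F = FF d c l.
  apply: functional_extensionality => m; rewrite hF /FF; apply: eq_bigr => i _.
  by rewrite (mexp_lin charR0).
exact: ML_main.
Qed.


Lemma GHK_E p q (G : mpoly R p) (H K : mpoly R q) :
  GHK G H K = fun m => prodxy G H m + emb_y K m.
Proof. by rewrite /GHK mmul_emb. Qed.

Lemma emb_y_homog p q d (K : mpoly R q) : homog d K -> homog d (emb_y (p := p) K).
Proof.
move=> hK m; rewrite /emb_y; case: ifP => [/forallP h0 /hK hd|]; last by rewrite eqxx.
rewrite mdeg_split; have -> : mdeg (mx m) = 0%N.
  by apply/eqP; rewrite mdeg_eq0; apply/eqP/ffunP => i; rewrite !ffunE; apply/eqP/h0.
by rewrite add0n -hd.
Qed.

Lemma GHK_homog p q eG eH d (G : mpoly R p) (H K : mpoly R q) :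
  homog eG G -> homog eH H -> homog d K -> (eG + eH)%N = d -> homog d (GHK G H K).
Proof.
move=> hG hH hK hd m; rewrite GHK_E.
have [h0|h0] := eqVneq (prodxy G H m) 0.
  by rewrite h0 add0r; apply: emb_y_homog.
by move=> _; rewrite -hd; apply: (prodxy_homog hG hH).
Qed.

Lemma pderiv_GHK p q (G : mpoly R p) (H K : mpoly R q) j :
  pderiv (lshift q j) (GHK G H K) = prodxy (pderiv j G) H.
Proof.
rewrite -pderiv_prod_l GHK_E; apply: functional_extensionality => m.
rewrite /pderiv mulrDr; have -> : emb_y K [ffun k => (m k + (k == lshift q j))%N] = 0.
  rewrite /emb_y; case: ifP => // /forallP /(_ j); rewrite ffunE eqxx addn1.
  by [].
by rewrite mulr0 addr0.
Qed.

Lemma lin_indep_cons n (f : mpoly R n) gs m0 :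
  lin_indep gs -> (forall i, nth mzero gs i m0 = 0) -> f m0 != 0 -> lin_indep (f :: gs).
Proof.
move=> /lin_indep_seq hg hz hf; apply/lin_indep_seq => c hc.
have c0 : c 0%N = 0.
  have := hc m0; rewrite big_ord_recl /= big1 ?addr0; last first.
    by move=> i _; rewrite hz mulr0.
  by move/eqP; rewrite mulf_eq0 (negbTE hf) orbF => /eqP.
case=> [//|i] /=; rewrite ltnS; apply: (hg (fun k => c k.+1)) => m.
by have := hc m; rewrite big_ord_recl /= c0 mul0r add0r.
Qed.

Lemma al_lt n e (f : mpoly R n) j m0 : homog e f -> f m0 != 0 ->
  (al (pderiv j f) < al f)%N.
Proof.
move=> hf hm0.
have hf1 : homog (e - 1) (pderiv j f) := homog_deriv (s := [:: j]) hf.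
have [ss [hs [li _]]] := al_basis hf1.
have := al_ge (ss := [::] :: map (rcons^~ j) ss) hf.
rewrite /= size_map hs; apply.
have -> : map (fun s => deriv_seq s f) (map (rcons^~ j) ss) =
  map (fun s => deriv_seq s (pderiv j f)) ss.
  by rewrite -map_comp; apply: eq_map => s /=; rewrite deriv_rcons.
apply: (lin_indep_cons li _ hm0) => i.
case: (ltnP i (size ss)) => hi; last by rewrite nth_default ?size_map.
rewrite (nth_map [::]) // -deriv_rcons; apply/eqP; apply: contraT => /(deriv_deg hf).
rewrite (hf _ hm0) size_rcons; lia.
Qed.

End Final.

Section Main.
Variable R : fieldType.
Hypothesis charR0 : [pchar R] =i pred0.

Lemma part1 (p q eG eH d : nat) (G : mpoly R p) (H K : mpoly R q) (j : 'I_p) :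
  homog eG G -> homog eH H -> homog d K -> (eG + eH)%N = d ->
  ((al (pderiv j G) - al (pderiv j (pderiv j G))) * al H
     <= waring_rank (GHK G H K) d)%N.
Proof.
move=> hG hH hK hd.
have hF := GHK_homog hG hH hK hd.
have hdec := waring_rank_spec charR0 hF.
have := ML_decomp charR0 (lshift q j) hdec.
rewrite pderiv_GHK pderiv_prod_l.
have hG1 : homog (eG - 1) (pderiv j G) := homog_deriv (s := [:: j]) hG.
have hG2 : homog (eG - 2) (pderiv j (pderiv j G)) := homog_deriv (s := [:: j; j]) hG.
by rewrite (al_prod hG1 hH) (al_prod hG2 hH) -mulnBl.
Qed.

Lemma mvar_lin n (i : 'I_n) : mvar i = lin (fun k => (k == i)%:R : R).
Proof.
apply: functional_extensionality => m; rewrite /mvar /lin (bigD1 i) //= eqxx big1 ?addr0.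
  by case: ifP.
by move=> k /negPf ->; case: ifP.
Qed.

Lemma part2 (p q a eH d : nat) (H K : mpoly R q) :
  (1 <= a)%N -> homog eH H -> homog d K -> (a + eH)%N = d ->
  (al H <= waring_rank (GHK (mexp (mvar (ord0 : 'I_p.+1)) a) H K) d)%N.
Proof.
move=> ha hH hK hd.
pose del := fun k : 'I_p.+1 => (k == ord0)%:R : R.
have hGE : mexp (mvar (ord0 : 'I_p.+1)) a = Pw del a by rewrite mvar_lin (mexp_lin charR0).
have hG : homog a (mexp (mvar (ord0 : 'I_p.+1)) a : mpoly R p.+1).
  by rewrite hGE => m; rewrite /Pw; case: (mdeg m =P a) => // _; rewrite eqxx.
have key := @part1 p.+1 q a eH d _ H K ord0 hG hH hK hd.
apply: leq_trans key; rewrite leq_pmull // subn_gt0.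
pose m0 : monom p.+1 := [ffun i => if i == ord0 then a.-1 else 0%N].
have hm0 : mdeg m0 = a.-1.
  rewrite /mdeg (bigD1 ord0) //= ffunE eqxx big1 ?addn0 // => i /negPf hi.
  by rewrite ffunE hi.
apply: (al_lt (e := a - 1) (m0 := m0) ord0).
  exact: (homog_deriv (s := [:: ord0]) hG).
rewrite hGE (pderiv_Pw charR0) /del eqxx mulr1 /Pw hm0 eqxx.
rewrite mulf_neq0 // ?(natr_neq0 charR0) -?lt0n // mulf_neq0 ?(mult_neq0 charR0) //.
rewrite big1 ?oner_neq0 // => i _; rewrite ffunE; case: eqP => _; first by rewrite expr1n.
by rewrite expr0.
Qed.

End Main.

Close Scope ring_scope.

Theorem mainTheorem7 (R : closedFieldType) (charR0 : [pchar R]%R =i pred0) :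
  (forall (p q eG eH d : nat) (G : mpoly R p) (H K : mpoly R q) (j : 'I_p),
     homog eG G -> homog eH H -> homog d K -> (eG + eH)%N = d ->
     ((al (pderiv j G) - al (pderiv j (pderiv j G))) * al H
        <= waring_rank (GHK G H K) d)%N)
  /\
  (forall (p q a eH d : nat) (H K : mpoly R q),
     (1 <= a)%N -> homog eH H -> homog d K -> (a + eH)%N = d ->
     (al H <= waring_rank (GHK (mexp (mvar (ord0 : 'I_p.+1)) a) H K) d)%N).
Proof.
split.
  by move=> p q eG eH d G H K j; apply: part1.
by move=> p q a eH d H K; apply: part2.
Qed.
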